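(* For each integer $d\ge 1$, the power series expansion at $x=0$ of the rational function $$\Delta_d(x)=\frac{1}{(1-x)^{d+1}-x^{d+1}}-\frac{1}{1-2x}$$ has only nonnegative coefficients. *)

(* Defs.v *)
From mathcomp Require Import all_boot all_order all_algebra.
Set Implicit Arguments. Unset Strict Implicit. Unset Printing Implicit Defensive.
Import Order.TTheory GRing.Theory Num.Theory.
Local Open Scope ring_scope.

(* Power series coefficients of 1/p(x) at x = 0, for a polynomial p with
   p(0) <> 0 (here p`_0 = 1 in our uses).  [inv_seq p n] is the list of the
   coefficients of x^0 .. x^n, computed by the standard recursion
   c_0 = 1/p_0,  c_n = -(1/p_0) * sum_{i=1}^n p_i c_{n-i}. *)
Fixpoint inv_seq (R : fieldType) (p : {poly R}) (n : nat) : seq R :=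
  match n with
  | O => [:: (p`_0)^-1]
  | n'.+1 =>
      let s := inv_seq p n' in
      rcons s (- (p`_0)^-1 * \sum_(1 <= i < n'.+2) p`_i * nth 0 s (n'.+1 - i)%N)
  end.

Definition inv_coef (R : fieldType) (p : {poly R}) (n : nat) : R :=
  nth 0 (inv_seq p n) n.

Definition denomD (d : nat) : {poly rat} :=
  (1 - 'X) ^+ d.+1 - 'X ^+ d.+1.

Definition denom2 : {poly rat} := 1 - 2%:R *: 'X.

Definition Delta_coef (d n : nat) : rat :=
  inv_coef (denomD d) n - inv_coef denom2 n.

(* Main.v *)
Require Import Defs.
From mathcomp Require Import all_boot all_order all_algebra.
From mathcomp Require Import ring.
Import Order.TTheory GRing.Theory Num.Theory.
Local Open Scope ring_scope.

Lemma inv_seq_size (R : fieldType) (p : {poly R}) n : size (inv_seq p n) = n.+1.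
Proof. by elim: n => [|n IH] //=; rewrite size_rcons IH. Qed.

Lemma inv_seq_prefix (R : fieldType) (p : {poly R}) n k :
  (k <= n)%N -> nth 0 (inv_seq p n) k = inv_coef p k.
Proof.
elim: n => [|n IH] hk.
  by move: hk; rewrite leqn0 => /eqP ->.
case: (ltngtP k n.+1) hk => // [hlt _|-> _]; last by [].
by rewrite /= nth_rcons inv_seq_size hlt IH.
Qed.

Lemma inv_coefS (R : fieldType) (p : {poly R}) n :
  inv_coef p n.+1 = - (p`_0)^-1 * \sum_(1 <= i < n.+2) p`_i * inv_coef p (n.+1 - i).
Proof.
rewrite {1}/inv_coef /= nth_rcons inv_seq_size ltnn eqxx; congr (_ * _).
apply: eq_big_nat => i /andP [h1 h2]; rewrite inv_seq_prefix //.
by rewrite leq_subLR -addn1 addnC leq_add2r.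
Qed.

Lemma inv_coef_eq (R : fieldType) (p q : {poly R}) N :
  p`_0 != 0 -> (forall k, (k <= N)%N -> (p * q)`_k = (k == 0)%:R) ->
  forall k, (k <= N)%N -> inv_coef p k = q`_k.
Proof.
move=> p0 hpq k; elim/ltn_ind: k => -[|k] IH hk.
  have := hpq 0%N hk; rewrite coefM big_ord1 /= => h.
  rewrite subnn in h; rewrite /inv_coef /= -[q`_0](mulKf p0) h mulr1 //.
have := hpq k.+1 hk; rewrite coefM big_ord_recl /= subn0 => h.
rewrite inv_coefS big_add1 /= big_mkord.
have -> : \sum_(i < k.+1) p`_i.+1 * inv_coef p (k.+1 - i.+1)
        = \sum_(i < k.+1) p`_(bump 0 i) * q`_(k.+1 - bump 0 i).
  apply: eq_bigr => i _; rewrite /bump /= add1n IH //.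
    by rewrite subSS ltnS leq_subr.
  by apply: leq_trans hk; rewrite leq_subr.
move/eqP: h; rewrite addr_eq0 => /eqP h.
by rewrite mulNr -mulrN -h mulKf.
Qed.

Definition eqm (N : nat) (a b : {poly rat}) := 'X^(N.+1) %| a - b.

Section Eqm.
Variable N : nat.
Local Notation "a === b" := (eqm N a b) (at level 70).

Lemma eqm_refl a : a === a.
Proof. by rewrite /eqm subrr dvdp0. Qed.
Lemma eqm_eq a b : a = b -> a === b.
Proof. by move=> ->; apply: eqm_refl. Qed.
Lemma eqm_sym a b : a === b -> b === a.
Proof. by rewrite /eqm -opprB dvdpNr. Qed.
Lemma eqm_trans a b c : a === b -> b === c -> a === c.
Proof.
rewrite /eqm => h1 h2; have -> : a - c = (a - b) + (b - c) by ring.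
exact: dvdp_add.
Qed.
Lemma eqm_add a b c d : a === b -> c === d -> a + c === b + d.
Proof.
rewrite /eqm => h1 h2; have -> : a + c - (b + d) = (a - b) + (c - d) by ring.
exact: dvdp_add.
Qed.
Lemma eqm_opp a b : a === b -> - a === - b.
Proof. by rewrite /eqm -opprD dvdpNr. Qed.
Lemma eqm_mul a b c d : a === b -> c === d -> a * c === b * d.
Proof.
rewrite /eqm => h1 h2; have -> : a * c - b * d = (a - b) * c + b * (c - d) by ring.
by apply: dvdp_add; [apply: dvdp_mulr | apply: dvdp_mull].
Qed.
Lemma eqm_exp a b k : a === b -> a ^+ k === b ^+ k.
Proof.
move=> h; elim: k => [|k IH]; first exact: eqm_refl.
by rewrite !exprS; apply: eqm_mul.
Qed.
Lemma eqm_coef a b k : a === b -> (k <= N)%N -> a`_k = b`_k.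
Proof.
move=> /dvdpP [c hc] hk; apply/eqP; rewrite -subr_eq0 -coefB hc coefMXn.
by rewrite ltnS hk.
Qed.
End Eqm.

Definition nng (p : {poly rat}) := forall i, 0 <= p`_i.

Lemma nng_add p q : nng p -> nng q -> nng (p + q).
Proof. by move=> hp hq i; rewrite coefD addr_ge0. Qed.
Lemma nng_mul p q : nng p -> nng q -> nng (p * q).
Proof.
move=> hp hq i; rewrite coefM; apply: sumr_ge0 => j _; exact: mulr_ge0.
Qed.
Lemma nng1 : nng 1.
Proof. by move=> i; rewrite coef1 ler0n. Qed.
Lemma nngX : nng 'X.
Proof. by move=> i; rewrite coefX ler0n. Qed.
Lemma nng_exp p k : nng p -> nng (p ^+ k).
Proof.
move=> hp; elim: k => [|k IH]; first exact: nng1.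
by rewrite exprS; apply: nng_mul.
Qed.
Lemma nng_sum (I : finType) (F : I -> {poly rat}) :
  (forall i, nng (F i)) -> nng (\sum_i F i).
Proof. by move=> h i; rewrite coef_sum; apply: sumr_ge0 => j _; apply: h. Qed.

Lemma geo (R : comRingType) (z : R) K : (1 - z) * \sum_(i < K) z ^+ i = 1 - z ^+ K.
Proof.
elim: K => [|K IH]; first by rewrite big_ord0 mulr0 expr0 subrr.
by rewrite big_ord_recr /= mulrDr IH exprS; ring.
Qed.

Section Main.
Variables d N : nat.
Local Notation "a === b" := (eqm N a b) (at level 70).
Local Notation X := ('X : {poly rat}).
Let u : {poly rat} := 1 - X.
Let w : {poly rat} := \sum_(k < N) X ^+ k.
Let Y : {poly rat} := X * w.
Let v : {poly rat} := 1 + Y.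
Let M : {poly rat} := \sum_(m < N.+1) (Y ^+ d.+1) ^+ m.
Let Sg : {poly rat} := \sum_(j < d.+1) Y ^+ j.
Let P : {poly rat} := \sum_(j < d.+1) (Y ^+ j *+ 'C(d, j) - Y ^+ j).
Let q2 : {poly rat} := \sum_(k < N.+1) (2%:R *: X) ^+ k.
Let H : {poly rat} := v * M * P.

Lemma F1 : u * v === 1.
Proof.
rewrite /eqm /u /v /Y.
have -> : (1 - X) * (1 + X * w) - 1 = - X + X * ((1 - X) * w) by ring.
rewrite /w geo.
have -> : - X + X * (1 - X ^+ N) = - X ^+ N.+1 by rewrite exprS; ring.
by rewrite dvdpNr dvdpp.
Qed.

Lemma F2 : u * Y === X.
Proof.
rewrite /eqm /u /Y.
have -> : (1 - X) * (X * w) - X = - X + X * ((1 - X) * w) by ring.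
rewrite /w geo.
have -> : - X + X * (1 - X ^+ N) = - X ^+ N.+1 by rewrite exprS; ring.
by rewrite dvdpNr dvdpp.
Qed.

Lemma F3 : (1 - Y ^+ d.+1) * M === 1.
Proof.
rewrite /eqm /M geo.
have -> : 1 - (Y ^+ d.+1) ^+ N.+1 - 1 = - (Y ^+ d.+1) ^+ N.+1 by ring.
rewrite dvdpNr -exprM mulnC exprM /Y exprMn.
have ht : forall t : {poly rat}, t %| t ^+ d.+1 by move=> t; rewrite exprS dvdp_mulr // dvdpp.
by apply: dvdp_trans (ht _); apply: dvdp_mulr; apply: dvdpp.
Qed.

Lemma F4 : (1 - 2%:R *: X) * q2 === 1.
Proof.
rewrite /eqm /q2 geo.
have -> : 1 - (2%:R *: X) ^+ N.+1 - 1 = - (2%:R *: X) ^+ N.+1 by ring.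
rewrite dvdpNr exprZn -mul_polyC.
by apply: dvdp_mull; apply: dvdpp.
Qed.

Lemma E1 : denomD d === u ^+ d.+1 * (1 - Y ^+ d.+1).
Proof.
rewrite /denomD.
apply: (@eqm_trans _ _ (u ^+ d.+1 - (u * Y) ^+ d.+1)).
  apply: eqm_add; first exact: eqm_refl.
  by apply: eqm_opp; apply: eqm_exp; apply: eqm_sym; apply: F2.
by apply: eqm_eq; rewrite exprMn; ring.
Qed.

Lemma PE : P = v ^+ d - Sg.
Proof. by rewrite /P /v /Sg sumrB (addrC 1) exprD1n. Qed.

Lemma E2 : denomD d * H === 1 - u ^+ d * Sg.
Proof.
apply: (@eqm_trans _ _ (u ^+ d.+1 * (1 - Y ^+ d.+1) * H)).
  by apply: eqm_mul; [apply: E1 | apply: eqm_refl].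
apply: (@eqm_trans _ _ (u ^+ d * (u * v) * ((1 - Y ^+ d.+1) * M) * P)).
  by apply: eqm_eq; rewrite /H exprS; ring.
apply: (@eqm_trans _ _ (u ^+ d * 1 * 1 * P)).
  apply: eqm_mul; last exact: eqm_refl.
  apply: eqm_mul; last exact: F3.
  by apply: eqm_mul; [apply: eqm_refl | apply: F1].
apply: (@eqm_trans _ _ ((u * v) ^+ d - u ^+ d * Sg)).
  by apply: eqm_eq; rewrite PE exprMn; ring.
apply: eqm_add; last exact: eqm_refl.
by rewrite -(expr1n _ d); apply: eqm_exp; apply: F1.
Qed.

Lemma E3 : denomD d * q2 === u ^+ d * Sg.
Proof.
apply: (@eqm_trans _ _ (u ^+ d.+1 * (1 - Y ^+ d.+1) * q2)).
  by apply: eqm_mul; [apply: E1 | apply: eqm_refl].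
apply: (@eqm_trans _ _ (u ^+ d * Sg * ((u - u * Y) * q2))).
  by apply: eqm_eq; rewrite /Sg -(@geo _ Y d.+1) exprS; ring.
apply: (@eqm_trans _ _ (u ^+ d * Sg * ((1 - 2%:R *: X) * q2))); last first.
  by rewrite -[X in _ === X]mulr1; apply: eqm_mul; [apply: eqm_refl | apply: F4].
apply: eqm_mul; first exact: eqm_refl.
apply: eqm_mul; last exact: eqm_refl.
apply: (@eqm_trans _ _ (u - X)).
  by apply: eqm_add; [apply: eqm_refl | apply: eqm_opp; apply: F2].
by apply: eqm_eq; rewrite /u scaler_nat; ring.
Qed.

Lemma E4 : denomD d * (q2 + H) === 1.
Proof.
rewrite mulrDr.
apply: (@eqm_trans _ _ (u ^+ d * Sg + (1 - u ^+ d * Sg))).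
  by apply: eqm_add; [apply: E3 | apply: E2].
by apply: eqm_eq; ring.
Qed.

Lemma E5 : denom2 * q2 === 1.
Proof. exact: F4. Qed.

Lemma nngH : nng H.
Proof.
rewrite /H; apply: nng_mul; first apply: nng_mul.
- apply: nng_add; first exact: nng1.
  by apply: nng_mul; [apply: nngX | apply: nng_sum => i; apply: nng_exp; apply: nngX].
- apply: nng_sum => i; apply: nng_exp; apply: nng_exp.
  by apply: nng_mul; [apply: nngX | apply: nng_sum => j; apply: nng_exp; apply: nngX].
- apply: nng_sum => j i.
  have hY : nng Y.
    by apply: nng_mul; [apply: nngX | apply: nng_sum => k; apply: nng_exp; apply: nngX].
  have : (0 < 'C(d, j))%N by rewrite bin_gt0 -ltnS.
  case: 'C(d, j) => // c _.
  rewrite mulrS addrC addrK coefMn mulrn_wge0 //.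
  exact: nng_exp.
Qed.

Lemma coef0_1 (p : {poly rat}) : p.[0] = 1 -> p`_0 != 0.
Proof. by rewrite horner_coef0 => ->; apply: oner_neq0. Qed.

Lemma main_eq : Delta_coef d N = H`_N.
Proof.
rewrite /Delta_coef.
have h1 : (denomD d)`_0 != 0.
  by apply: coef0_1; rewrite /denomD !hornerE expr0n /= subr0 expr1n.
have h2 : denom2`_0 != 0.
  by apply: coef0_1; rewrite /denom2 !hornerE.
rewrite (@inv_coef_eq _ _ (q2 + H) N h1) //; last first.
  by move=> k hk; rewrite (@eqm_coef N _ _ k E4 hk) coef1.
rewrite (@inv_coef_eq _ _ q2 N h2) //; last first.
  by move=> k hk; rewrite (@eqm_coef N _ _ k E5 hk) coef1.
by rewrite coefD addrC addKr.
Qed.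

End Main.

Theorem theorem3p3 (d : nat) (hd : (1 <= d)%N) (n : nat) :
  0 <= Delta_coef d n.
Proof. by rewrite main_eq; apply: nngH. Qed.
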